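(* Let $\mathbb{K}$ be a field of characteristic $0$ and let $L=\sum_{i=0}^{J}a_i(n)\sigma^i$ with $a_i(n)\in\mathbb{K}[n]$ not all zero, and let $d_L=\max_{0\le i\le J}\{\deg a_i(n)\}$. Then $\deg L\le d_L$, and if $\deg L=d_L$ then $L$ is nondegenerated.
   Context: $\sigma$ is the shift operator. Put $b_k(n)=\sum_{j=k}^{J}\binom{j}{k}a_{J-j}(n+j-J)$ for $0\le k\le J$ and $d=\deg L=\max_{0\le k\le J}\{\deg b_k(n)-k\}$. Let $f(s)=\sum_{k=0}^{J}[n^{d+k}](b_k(n))\,s^{\underline{k}}$, where $[n^m](b)$ is the coefficient of $n^m$ in $b$ and $s^{\underline{k}}=s(s-1)\cdots(s-k+1)$, and $R_L=\{s\in\mathbb{N}=\{0,1,2,\dots\}:f(s)=0\}$. $L$ is degenerated if $R_L\neq\emptyset$ and nondegenerated otherwise. *)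

(* Defs.v *)
From HB Require Import structures.
From mathcomp Require Import all_boot all_order all_algebra.
Set Implicit Arguments. Unset Strict Implicit. Unset Printing Implicit Defensive.
Import Order.TTheory GRing.Theory Num.Theory.
Local Open Scope ring_scope.

(* The operator L = \sum_{i=0}^J a_i(n) sigma^i is represented by J and the
   coefficient family a : nat -> {poly K} (only a 0, ..., a J are used). *)

Section Defs.
Variable K : fieldType.

Definition coefz (p : {poly K}) (m : int) : K :=
  match m with Posz n => p`_n | Negz _ => 0 end.

Definition bcoef (J : nat) (a : nat -> {poly K}) (k : nat) : {poly K} :=
  \sum_(k <= j < J.+1)
     'C(j, k)%:R *: (a (J - j)%N \Po ('X + ((j%:Z - J%:Z)%:~R)%:P)).

(* The neutral element -J-1 lies strictly below every term
   deg b_k - k >= -J, so it never affects the max when some b_k != 0. *)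
Definition degL (J : nat) (a : nat -> {poly K}) : int :=
  \big[Order.max/ (- (J%:Z) - 1)]_(k < J.+1 | bcoef J a k != 0)
     ((size (bcoef J a k))%:Z - 1 - k%:Z).

Definition dL (J : nat) (a : nat -> {poly K}) : int :=
  ((\max_(i < J.+1) size (a i)).-1)%:Z.

Definition falling (s k : nat) : K := \prod_(i < k) (s%:R - i%:R).

Definition indpoly (J : nat) (a : nat -> {poly K}) (s : nat) : K :=
  \sum_(k < J.+1) coefz (bcoef J a k) (degL J a + k%:Z) * falling s k.

Definition RL (J : nat) (a : nat -> {poly K}) (s : nat) : Prop :=
  indpoly J a s = 0.

Definition degenerated (J : nat) (a : nat -> {poly K}) : Prop :=
  exists s : nat, RL J a s.

Definition nondegenerated (J : nat) (a : nat -> {poly K}) : Prop :=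
  ~ degenerated J a.
End Defs.

(* Main.v *)
Require Import Defs.
From HB Require Import structures.
From mathcomp Require Import all_boot all_order all_algebra.
From mathcomp Require Import zify.
Import Order.TTheory GRing.Theory Num.Theory.
Local Open Scope ring_scope.

Lemma size_bcoef (K : fieldType) (J : nat) (a : nat -> {poly K}) k :
  (size (bcoef J a k) <= \max_(i < J.+1) size (a i))%N.
Proof.
rewrite /bcoef; apply: (big_ind (fun p : {poly K} => size p <= _)%N).
- by rewrite size_poly0.
- move=> p q Hp Hq; apply: leq_trans (size_polyD _ _) _; by rewrite geq_max Hp Hq.
- move=> j _; apply: leq_trans (size_scale_leq _ _) _.
  rewrite size_comp_poly2 ?size_XaddC //.
  have Hj : (J - j < J.+1)%N by rewrite ltnS leq_subr.
  by have := @leq_bigmax _ (fun i : 'I_J.+1 => size (a i)) (Ordinal Hj).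
Qed.

Theorem lemma3p2 (K : fieldType) (charK0 : [pchar K] =i pred0)
    (J : nat) (a : nat -> {poly K})
    (a_nz : exists2 i : nat, (i <= J)%N & a i != 0) :
  degL J a <= dL J a /\ (degL J a = dL J a -> nondegenerated J a).
Proof.
set M := (\max_(i < J.+1) size (a i))%N.
have M1 : (0 < M)%N.
  case: a_nz => i Hi Hai.
  have Hi' : (i < J.+1)%N by [].
  apply: leq_trans (@leq_bigmax _ (fun i : 'I_J.+1 => size (a i)) (Ordinal Hi')).
  by rewrite /= size_poly_gt0.
have Hs := @size_bcoef K J a.
rewrite -/M in Hs.
have dLE : dL J a = (M.-1)%:Z by [].
split.
  rewrite /degL dLE; apply: bigmax_le; first by lia.
  move=> k _; have := Hs k; lia.
rewrite dLE => Hdeg [s Hsr].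
move: Hsr; rewrite /RL /indpoly big_ord_recl big1; last first.
  move=> k _; rewrite lift0 Hdeg -PoszD /= nth_default ?mul0r //.
  by apply: leq_trans (Hs _) _; lia.
rewrite addr0 /falling big_ord0 mulr1 Hdeg /= addn0 => Hb.
have Hsz : (size (bcoef J a 0) <= M.-1)%N.
  case: (ltnP M.-1 (size (bcoef J a 0))) => // Hlt.
  have E : size (bcoef J a 0) = M by have := Hs 0%N; lia.
  have : lead_coef (bcoef J a 0) = 0 by rewrite /lead_coef E.
  move/eqP; rewrite lead_coef_eq0 => /eqP Z.
  by move: E; rewrite Z size_poly0; lia.
have : degL J a <= (M.-1)%:Z - 1.
  rewrite /degL; apply: bigmax_le; first by lia.
  move=> [[|k] Hk] _ /=; first by move: Hsz; set z := size (bcoef J a 0); lia.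
  have := Hs k.+1; set z := size (bcoef J a k.+1); lia.
rewrite Hdeg; lia.
Qed.
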